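(* Let $((A,\cdot),N)$ be a Nijenhuis algebra and $((M,\triangleright,\triangleleft),N_M)$ a Nijenhuis bimodule over it. Then there is a bijection $\mathcal{E}xt^2((A,N),(M,N_M))\cong H^2_{\mathrm{NAlg}}((A,N);(M,N_M))$.
   Context: Over a field of characteristic $0$. Nijenhuis algebra: associative $(A,\cdot)$ with linear $N$, $N(a)N(b)=N(N(a)b+aN(b)-N(ab))$; a homomorphism of Nijenhuis algebras is an algebra morphism commuting with the operators. Nijenhuis bimodule: $A$-bimodule $(M,\triangleright,\triangleleft)$ with linear $N_M$ such that $N(a)\triangleright N_M(u)=N_M(N(a)\triangleright u+a\triangleright N_M(u)-N_M(a\triangleright u))$ and $N_M(u)\triangleleft N(a)=N_M(N_M(u)\triangleleft a+u\triangleleft N(a)-N_M(u\triangleleft a))$. An abelian extension of $((A,\cdot),N)$ by $(M,N_M)$ is a Nijenhuis algebra $((E,\cdot_E),N_E)$ with a short exact sequence $0\to((M,0),N_M)\xrightarrow{i}((E,\cdot_E),N_E)\xrightarrow{p}((A,\cdot),N)\to0$ of Nijenhuis algebra homomorphisms, where $M$ carries the zero multiplication. For any linear section $s$ of $p$, $a\triangleright u=s(a)\cdot_Ei(u)$, $u\triangleleft a=i(u)\cdot_Es(a)$ (identifying $M$ with $i(M)$) is independent of $s$ and, with $N_M$, is a Nijenhuis bimodule structure on $M$ (the induced one). Two abelian extensions $E,E'$ are isomorphic if there is a Nijenhuis algebra isomorphism $\varphi:E\to E'$ with $\varphi\circ i=i'$ and $p'\circ\varphi=p$. $\mathcal{E}xt^2((A,N),(M,N_M))$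 is the set of isomorphism classes of abelian extensions whose induced Nijenhuis bimodule structure is the prescribed $((M,\triangleright,\triangleleft),N_M)$. Cohomology: $C^0_{\mathrm{NAlg}}=0$, $C^1_{\mathrm{NAlg}}=\mathrm{Hom}(A,M)$, $C^n_{\mathrm{NAlg}}((A,N);(M,N_M))=\mathrm{Hom}(A^{\otimes n},M)\oplus\mathrm{Hom}(A^{\otimes n-1},M)$ ($n\ge2$); $\delta_{\mathrm{NAlg}}(f)=(\delta_{\mathrm{Hoch}}f,-\partial^{N,N_M}f)$ on $C^1$, $\delta_{\mathrm{NAlg}}(\chi,F)=(\delta_{\mathrm{Hoch}}\chi,\ d_{N,N_M}F+(-1)^n\partial^{N,N_M}\chi)$ on $C^n$, $n\ge2$. Here $(\delta_{\mathrm{Hoch}}f)(a_1,\dots,a_{n+1})=a_1\triangleright f(a_2,\dots)+\sum_{i=1}^n(-1)^if(\dots,a_ia_{i+1},\dots)+(-1)^{n+1}f(a_1,\dots,a_n)\triangleleft a_{n+1}$; $(d_{N,N_M}F)(a_1,\dots,a_{n+1})=N(a_1)\triangleright F(a_2,\dots,a_{n+1})-(-1)^nF(a_1,\dots,a_n)\triangleleft N(a_{n+1})+\sum_{i=1}^n(-1)^iF(a_1,\dots,a_{i-1},N(a_i)a_{i+1}+a_iN(a_{i+1})-N(a_ia_{i+1}),\dots,a_{n+1})-N_M((\delta_{\mathrm{Hoch}}F)(a_1,\dots,a_{n+1}))$ for $n\ge1$; $\partial^{N,N_M}(f)(a_1,\dots,a_n)=\sum_{S\subseteq\{1..n\}}(-1)^{|S|}N_M^{|S|}(f(b_1,\dots,b_n))$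 with $b_i=a_i$ for $i\in S$, $b_i=N(a_i)$ otherwise. $H^2_{\mathrm{NAlg}}$ = 2-cocycles mod 2-coboundaries. *)

(* Defs.v *)
From HB Require Import structures.
From mathcomp Require Import all_boot all_order all_algebra.
Set Implicit Arguments. Unset Strict Implicit. Unset Printing Implicit Defensive.
Import GRing.Theory.
Local Open Scope ring_scope.

Section Nijenhuis.
Variable K : fieldType.

(* bilinear maps  U x V -> W  (= Hom(U (x) V, W)) *)
Definition bilinear_map (U V W : lmodType K) (f : U -> V -> W) : Prop :=
  (forall v, linear (fun u => f u v)) /\ (forall u, linear (f u)).

Definition is_nijenhuis_algebra (A : lmodType K) (mul : A -> A -> A) (N : A -> A) : Prop :=
  [/\ bilinear_map mul, associative mul, linear N &
      (forall a b, mul (N a) (N b) = N (mul (N a) b + mul a (N b) - N (mul a b)))].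

Section Alg.
Variable A : lmodType K.
Variables (mul : A -> A -> A) (N : A -> A).
Variable M : lmodType K.
Variables (lact : A -> M -> M) (ract : M -> A -> M) (NM : M -> M).

Definition is_nijenhuis_bimodule : Prop :=
  [/\ bilinear_map lact, bilinear_map ract & linear NM] /\
  [/\ (forall a b u, lact (mul a b) u = lact a (lact b u)),
      (forall a b u, ract u (mul a b) = ract (ract u a) b),
      (forall a b u, ract (lact a u) b = lact a (ract u b)),
      (forall a u, lact (N a) (NM u)
                  = NM (lact (N a) u + lact a (NM u) - NM (lact a u))) &
      (forall a u, ract (NM u) (N a)
                  = NM (ract (NM u) a + ract u (N a) - NM (ract u a)))].

Record abelian_extension := AbExt {
  ext_E : lmodType K;
  ext_mul : ext_E -> ext_E -> ext_E;
  ext_N : ext_E -> ext_E;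
  ext_i : M -> ext_E;
  ext_p : ext_E -> A;
  ext_nij : is_nijenhuis_algebra ext_mul ext_N;
  (* i : ((M,0),NM) -> ((E,mulE),NE) is a Nijenhuis algebra homomorphism *)
  ext_i_lin : linear ext_i;
  ext_i_mul : forall u v, ext_i (0 : M) = ext_mul (ext_i u) (ext_i v);
  ext_i_N : forall u, ext_i (NM u) = ext_N (ext_i u);
  ext_p_lin : linear ext_p;
  ext_p_mul : forall x y, ext_p (ext_mul x y) = mul (ext_p x) (ext_p y);
  ext_p_N : forall x, ext_p (ext_N x) = N (ext_p x);
  ext_i_inj : injective ext_i;
  ext_p_surj : forall a, exists x, ext_p x = a;
  ext_exact : forall x, ext_p x = 0 <-> exists u, x = ext_i u;
  (* the induced Nijenhuis bimodule structure is the prescribed one *)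
  ext_induced : forall s : A -> ext_E, linear s -> cancel s ext_p ->
    forall a u, ext_mul (s a) (ext_i u) = ext_i (lact a u) /\
                ext_mul (ext_i u) (s a) = ext_i (ract u a)
}.

Definition ext_iso (E E' : abelian_extension) : Prop :=
  exists phi : ext_E E -> ext_E E',
    [/\ linear phi & bijective phi] /\
    [/\ (forall x y, phi (ext_mul x y) = ext_mul (phi x) (phi y)),
        (forall x, phi (ext_N x) = ext_N (phi x)),
        (forall u, phi (ext_i E u) = ext_i E' u) &
        (forall x, ext_p (phi x) = ext_p x)].

Definition hoch1 (f : A -> M) : A -> A -> M :=
  fun a1 a2 => lact a1 (f a2) - f (mul a1 a2) + ract (f a1) a2.

Definition hoch2 (chi : A -> A -> M) : A -> A -> A -> M :=
  fun a1 a2 a3 => lact a1 (chi a2 a3) - chi (mul a1 a2) a3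
                  + chi a1 (mul a2 a3) - ract (chi a1 a2) a3.

(* partial^{N,NM} on Hom(A,M) : sum over S subset {1} *)
Definition partial1 (f : A -> M) : A -> M :=
  fun a => f (N a) - NM (f a).

(* partial^{N,NM} on Hom(A (x) A, M) : sum over S subset {1,2} *)
Definition partial2 (chi : A -> A -> M) : A -> A -> M :=
  fun a1 a2 => chi (N a1) (N a2) - NM (chi a1 (N a2)) - NM (chi (N a1) a2)
               + NM (NM (chi a1 a2)).

Definition dNN1 (F : A -> M) : A -> A -> M :=
  fun a1 a2 => lact (N a1) (F a2) + ract (F a1) (N a2)
               - F (mul (N a1) a2 + mul a1 (N a2) - N (mul a1 a2))
               - NM (hoch1 F a1 a2).

(* 2-cocycles of C^*_NAlg((A,N);(M,NM)) :
   delta_NAlg (chi, F) = (hoch chi, d F + (-1)^2 partial chi) = 0 *)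
Record cocycle2 := Cocycle2 {
  coc_chi : A -> A -> M;
  coc_F : A -> M;
  coc_chi_bilin : bilinear_map coc_chi;
  coc_F_lin : linear coc_F;
  coc_hoch : forall a1 a2 a3, hoch2 coc_chi a1 a2 a3 = 0;
  coc_N : forall a1 a2, dNN1 coc_F a1 a2 + partial2 coc_chi a1 a2 = 0
}.

(* cohomologous 2-cocycles: the difference is
   delta_NAlg f = (hoch f, - partial f) for some f in C^1 = Hom(A,M) *)
Definition cohomologous (c c' : cocycle2) : Prop :=
  exists f : A -> M, [/\ linear f,
    (forall a1 a2, coc_chi c a1 a2 - coc_chi c' a1 a2 = hoch1 f a1 a2) &
    (forall a, coc_F c a - coc_F c' a = - partial1 f a)].

End Alg.
End Nijenhuis.

(* Main.v *)
From HB Require Import structures.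
From mathcomp Require Import all_boot all_order all_algebra.
From mathcomp Require Import boolp classical_sets.
Require Import Defs.
Set Implicit Arguments. Unset Strict Implicit. Unset Printing Implicit Defensive.
Import GRing.Theory.
Local Open Scope ring_scope.
Section Lin.
Variable K : fieldType.
Variables (U V : lmodType K) (f : U -> V) (hf : linear f).
Lemma lin0 : f 0 = 0.
Proof. have h := hf 1 0 0; rewrite scaler0 addr0 scale1r in h. by have := congr1 (fun z => z - f 0) h; rewrite /= addrK subrr. Qed.
Lemma linD x y : f (x + y) = f x + f y.
Proof. by have := hf 1 x y; rewrite !scale1r. Qed.
Lemma linZ k x : f (k *: x) = k *: f x.
Proof. by rewrite -[k *: x]addr0 hf lin0 addr0. Qed.
Lemma linN x : f (- x) = - f x.
Proof. by rewrite -scaleN1r linZ scaleN1r. Qed.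
Lemma linB x y : f (x - y) = f x - f y.
Proof. by rewrite linD linN. Qed.
Lemma linE k x y : f (k *: x + y) = k *: f x + f y. Proof. exact: hf. Qed.
End Lin.
Inductive zexpr := ZAtom of nat | ZZero | ZAdd of zexpr & zexpr | ZOpp of zexpr.
Fixpoint zcoef e (i : nat) : int :=
  match e with ZAtom n => (n == i)%:Z | ZZero => 0 | ZAdd a b => zcoef a i + zcoef b i
  | ZOpp a => - zcoef a i end.
Fixpoint zmax e : nat :=
  match e with ZAtom n => n.+1 | ZZero => 0%N | ZAdd a b => maxn (zmax a) (zmax b)
  | ZOpp a => zmax a end.
Section ZR.
Variable V : zmodType.
Fixpoint zeval (env : seq V) e : V :=
  match e with ZAtom n => nth 0 env n | ZZero => 0 | ZAdd a b => zeval env a + zeval env b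
  | ZOpp a => - zeval env a end.
Lemma zeval_sum env e n : (zmax e <= n)%N ->
  zeval env e = \sum_(0 <= i < n) nth 0 env i *~ zcoef e i.
Proof.
elim: e => [j|| a IHa b IHb | a IHa] /= hn.
- rewrite (bigD1_seq j) ?mem_index_iota ?iota_uniq //= eqxx mulr1z big1 ?addr0 //.
  by move=> i /negbTE; rewrite eq_sym => ->.
- by rewrite big1 // => i _; rewrite mulr0z.
- rewrite geq_max in hn; case/andP: hn => ha hb.
  by rewrite IHa // IHb // -big_split; apply: eq_bigr => i _; rewrite mulrzDr.
- by rewrite IHa // -sumrN; apply: eq_bigr => i _; rewrite mulrNz.
Qed.
Lemma zsolve env e1 e2 :
  all (fun i => zcoef e1 i == zcoef e2 i) (iota 0 (maxn (zmax e1) (zmax e2))) ->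
  zeval env e1 = zeval env e2.
Proof.
move=> /allP H.
rewrite (@zeval_sum env e1 (maxn (zmax e1) (zmax e2))) ?leq_maxl //.
rewrite (@zeval_sum env e2 (maxn (zmax e1) (zmax e2))) ?leq_maxr //.
apply: eq_big_seq => i; rewrite mem_index_iota => hi.
by rewrite (eqP (H i _)) // mem_iota.
Qed.
End ZR.

Ltac zappend env x := match env with
  | nil => constr:(x :: nil)
  | ?h :: ?r => let r' := zappend r x in constr:(h :: r') end.
Ltac zindex x env := match env with
  | (x :: _) => constr:(0%N)
  | (_ :: ?r) => let n := zindex x r in constr:(n.+1) end.
Ltac zreify t env :=
  match t with
  | @GRing.add _ ?a ?b =>
      let r1 := zreify a env in
      match r1 with (?e1, ?env1) =>
      let r2 := zreify b env1 in
      match r2 with (?e2, ?env2) => constr:((ZAdd e1 e2, env2)) end end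
  | @GRing.opp _ ?a =>
      let r1 := zreify a env in
      match r1 with (?e1, ?env1) => constr:((ZOpp e1, env1)) end
  | @GRing.zero _ => constr:((ZZero, env))
  | _ => match goal with
         | _ => let n := zindex t env in constr:((ZAtom n, env))
         | _ => let n := eval compute in (size env) in
                let env' := zappend env t in constr:((ZAtom n, env'))
         end
  end.
Ltac zsolve_tac :=
  match goal with |- @eq ?T ?x ?y =>
    let r1 := zreify x (@nil T) in
    match r1 with (?e1, ?env1) =>
    let r2 := zreify y env1 in
    match r2 with (?e2, ?env2) =>
      apply: (@zsolve _ env2 e1 e2); vm_compute; reflexivity
    end end end.

Lemma eq_sub0 (V : zmodType) (x y : V) : x = y -> x - y = 0.
Proof. by move=> ->; rewrite subrr. Qed.
Ltac zuse h :=
  let H := fresh "H" in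
  have H := eq_sub0 h;
  apply: subr0_eq;
  first [ apply: (etrans _ H); zsolve_tac
        | apply: (etrans _ (etrans (congr1 -%R H) oppr0)); zsolve_tac ].
Section Sec.
Variable K : fieldType.
Variables (U V : lmodType K) (f : U -> V) (hf : linear f)
  (fsurj : forall a, exists x, f x = a).

Lemma exists_section : exists s : V -> U, linear s /\ cancel s f.
Proof.
pose P (G : set U) := (forall k x y, G x -> G y -> G (k *: x + y)) /\
                      (forall x, G x -> f x = 0 -> x = 0).
have [A [PA Amax]] : exists A, P A /\ forall B, (A `<` B)%classic -> ~ P B.
  apply: Zorn_bigcup => F FP Ftot; split.
  - move=> k x y [X FX Xx] [Y FY Yy].
    case: (Ftot X Y FX FY) => [XY|YX].
    + exists Y => //; apply: (FP Y FY).1 => //; exact: XY.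
    + exists X => //; apply: (FP X FX).1 => //; exact: YX.
  - by move=> x [X FX Xx]; apply: (FP X FX).2.
case: PA => Acl Ainj.
pose A0 x := A x \/ x = 0.
have A0cl k x y : A0 x -> A0 y -> A0 (k *: x + y).
  case=> [Ax|->]; case=> [Ay|->].
  - by left; apply: (Acl).
  - left; rewrite addr0 -[k *: x]addr0; apply: (Acl) => //.
    by have := Acl (-1) x x Ax Ax; rewrite scaleN1r addNr.
  - by rewrite scaler0 add0r; left.
  - by right; rewrite scaler0 addr0.
have A0inj x : A0 x -> f x = 0 -> x = 0.
  by case=> [Ax|->] // ; apply: (Ainj).
have claim a : exists x, A0 x /\ f x = a.
  case: (pselect (exists x, A0 x /\ f x = a)) => // Hn; exfalso.
  have [x0 fx0] := fsurj a.
  pose B y := exists k, A0 (y - k *: x0).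
  apply: (Amax B); last split.
  - split.
    + by move=> y Ay; exists 0; rewrite scale0r subr0; left.
    + move=> BA; apply: (Hn); exists x0; split => //.
      have Bx0 : B x0 by exists 1; rewrite scale1r subrr; right.
      by left; apply: BA.
  - move=> c y1 y2 [k1 h1] [k2 h2]; exists (c * k1 + k2).
    have := A0cl c _ _ h1 h2.
    by rewrite scalerDl -scalerA scalerBr addrACA opprD.
  - move=> y [k hk] fy.
    have fg : f (y - k *: x0) = - (k *: a).
      by rewrite (linB hf) (linZ hf) fy fx0 sub0r.
    case: (eqVneq k 0) => [k0|kn0].
      by move: hk fg; rewrite k0 !scale0r subr0 oppr0; apply: (A0inj).
    exfalso; apply: (Hn); exists ((- k^-1) *: (y - k *: x0)); split.
      by rewrite -[_ *: _]addr0; apply: (A0cl) => //; right.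
    by rewrite (linZ hf) fg scalerN scaleNr opprK scalerA mulVf // scale1r.
pose s a := sval (cid (claim a)).
have sA0 a : A0 (s a) by exact: (svalP (cid (claim a))).1.
have sf a : f (s a) = a by exact: (svalP (cid (claim a))).2.
exists s; split => //.
move=> k a b; apply/eqP; rewrite -subr_eq0; apply/eqP; apply: (A0inj).
  have h1 := A0cl (-1) _ _ (sA0 b) (sA0 (k *: a + b)).
  have := A0cl (- k) _ _ (sA0 a) h1.
  by rewrite scaleN1r scaleNr opprD addrA addrC.
by rewrite (linB hf) (linD hf) (linZ hf) !sf subrr.
Qed.
End Sec.
Section Bil.
Variable K : fieldType.
Variables (U V W : lmodType K) (g : U -> V -> W) (hg : bilinear_map g).
Lemma bilD1 x y v : g (x + y) v = g x v + g y v. Proof. exact: (linD (hg.1 v)). Qed.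
Lemma bilN1 x v : g (- x) v = - g x v. Proof. exact: (linN (hg.1 v)). Qed.
Lemma bilZ1 k x v : g (k *: x) v = k *: g x v. Proof. exact: (linZ (hg.1 v)). Qed.
Lemma bil01 v : g 0 v = 0. Proof. exact: (lin0 (hg.1 v)). Qed.
Lemma bilD2 x y v : g v (x + y) = g v x + g v y. Proof. exact: (linD (hg.2 v)). Qed.
Lemma bilN2 x v : g v (- x) = - g v x. Proof. exact: (linN (hg.2 v)). Qed.
Lemma bilZ2 k x v : g v (k *: x) = k *: g v x. Proof. exact: (linZ (hg.2 v)). Qed.
Lemma bil02 v : g v 0 = 0. Proof. exact: (lin0 (hg.2 v)). Qed.
End Bil.

Section Main.
Variable K : fieldType.
Variables (A : lmodType K) (mul : A -> A -> A) (N : A -> A).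
Variables (M : lmodType K) (lact : A -> M -> M) (ract : M -> A -> M) (NM : M -> M).
Hypothesis HA : is_nijenhuis_algebra mul N.
Hypothesis HM : is_nijenhuis_bimodule mul N lact ract NM.

Lemma mul_bil : bilinear_map mul. Proof. by case: HA. Qed.
Lemma mul_assoc : associative mul. Proof. by case: HA. Qed.
Lemma N_lin : linear N. Proof. by case: HA. Qed.
Lemma lact_bil : bilinear_map lact. Proof. by case: HM => -[]. Qed.
Lemma ract_bil : bilinear_map ract. Proof. by case: HM => -[]. Qed.
Lemma NM_lin : linear NM. Proof. by case: HM => -[]. Qed.
Lemma lact_assoc a b u : lact (mul a b) u = lact a (lact b u). Proof. by case: HM => _ []. Qed.
Lemma ract_assoc a b u : ract u (mul a b) = ract (ract u a) b. Proof. by case: HM => _ []. Qed.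
Lemma lr_assoc a b u : ract (lact a u) b = lact a (ract u b). Proof. by case: HM => _ []. Qed.
Lemma nijL a u : lact (N a) (NM u) = NM (lact (N a) u + lact a (NM u) - NM (lact a u)).
Proof. by case: HM => _ []. Qed.
Lemma nijR a u : ract (NM u) (N a) = NM (ract (NM u) a + ract u (N a) - NM (ract u a)).
Proof. by case: HM => _ []. Qed.

Local Notation mulE E := (@ext_mul _ _ _ _ _ _ _ _ E).
Local Notation NofE E := (@ext_N _ _ _ _ _ _ _ _ E).
Local Notation pofE E := (@ext_p _ _ _ _ _ _ _ _ E).

Section Ext1.
Variable E : abelian_extension mul N lact ract NM.
Lemma mE_bil : bilinear_map (mulE E). Proof. by case: (ext_nij E). Qed.
Lemma mE_assoc : associative (mulE E). Proof. by case: (ext_nij E). Qed.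
Lemma NE_lin : linear (NofE E). Proof. by case: (ext_nij E). Qed.
Lemma NE_nij x y : mulE E (NofE E x) (NofE E y) =
  NofE E (mulE E (NofE E x) y + mulE E x (NofE E y) - NofE E (mulE E x y)).
Proof. by case: (ext_nij E). Qed.
Lemma mul_ii u v : mulE E (ext_i E u) (ext_i E v) = 0.
Proof. by rewrite -ext_i_mul (lin0 (ext_i_lin E)). Qed.
Lemma p_i u : pofE E (ext_i E u) = 0.
Proof. by apply/(@ext_exact _ _ _ _ _ _ _ _ E); exists u. Qed.
End Ext1.

Section Ext2.
Variable E : abelian_extension mul N lact ract NM.
Variable s : A -> ext_E E.
Hypotheses (hs : linear s) (hsp : cancel s (pofE E)).
Local Notation mE := (mulE E).
Local Notation NE := (NofE E).
Local Notation iE := (ext_i E).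
Local Notation pE := (pofE E).

Definition rr (x : ext_E E) : M :=
  match pselect (exists u, iE u = x - s (pE x)) with
  | left h => sval (cid h) | right _ => 0 end.

Lemma rr_spec x : iE (rr x) = x - s (pE x).
Proof.
rewrite /rr; case: pselect => [h|nh]; first exact: (svalP (cid h)).
exfalso; apply: nh.
have h0 : pE (x - s (pE x)) = 0 by rewrite (linB (@ext_p_lin _ _ _ _ _ _ _ _ E)) hsp subrr.
have [u hu] := (@ext_exact _ _ _ _ _ _ _ _ E (x - s (pE x))).1 h0.
by exists u.
Qed.

Lemma decomp x : x = s (pE x) + iE (rr x).
Proof. by rewrite rr_spec addrC subrK. Qed.

Lemma p_si a u : pE (s a + iE u) = a.
Proof. by rewrite (linD (@ext_p_lin _ _ _ _ _ _ _ _ E)) hsp p_i addr0. Qed.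

Lemma rr_si a u : rr (s a + iE u) = u.
Proof. by apply: (@ext_i_inj _ _ _ _ _ _ _ _ E); rewrite rr_spec p_si addrAC subrr add0r. Qed.

Lemma ext_eq x y : pE x = pE y -> rr x = rr y -> x = y.
Proof. by move=> h1 h2; rewrite (decomp x) (decomp y) h1 h2. Qed.

Lemma rr_lin : linear rr.
Proof.
move=> k x y; apply: (@ext_i_inj _ _ _ _ _ _ _ _ E).
rewrite (linD (ext_i_lin E)) (linZ (ext_i_lin E)) !rr_spec.
rewrite (linD (@ext_p_lin _ _ _ _ _ _ _ _ E)) (linZ (@ext_p_lin _ _ _ _ _ _ _ _ E)) hs scalerBr.
zsolve_tac.
Qed.

Lemma rr_s a : rr (s a) = 0.
Proof. by have := rr_si a 0; rewrite (lin0 (ext_i_lin E)) addr0. Qed.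

Lemma rr_i u : rr (iE u) = u.
Proof. by have := rr_si 0 u; rewrite (lin0 hs) add0r. Qed.

Definition chi a b := rr (mE (s a) (s b)).
Definition FF a := rr (NE (s a)).

Lemma mul_si a u : mE (s a) (iE u) = iE (lact a u).
Proof. exact: (@ext_induced _ _ _ _ _ _ _ _ E s hs hsp a u).1. Qed.
Lemma mul_is a u : mE (iE u) (s a) = iE (ract u a).
Proof. exact: (@ext_induced _ _ _ _ _ _ _ _ E s hs hsp a u).2. Qed.

Lemma rr_mul x y : rr (mE x y) =
  chi (pE x) (pE y) + lact (pE x) (rr y) + ract (rr x) (pE y).
Proof.
rewrite {1}(decomp x) {1}(decomp y).
rewrite (bilD1 (mE_bil E)) !(bilD2 (mE_bil E)) mul_si mul_is mul_ii addr0.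
by rewrite !(linD rr_lin) !rr_i.
Qed.

Lemma rr_N x : rr (NE x) = FF (pE x) + NM (rr x).
Proof.
rewrite {1}(decomp x) (linD (NE_lin (E:=E))) -ext_i_N.
by rewrite (linD rr_lin) rr_i.
Qed.

Local Notation pE_lin := (@ext_p_lin _ _ _ _ _ _ _ _ E).
Local Notation iE_lin := (ext_i_lin E).

Lemma chi_bil : bilinear_map chi.
Proof.
split=> [b|a] k x y /=; rewrite /chi hs.
- by rewrite (bilD1 (mE_bil E)) (bilZ1 (mE_bil E)) (linE rr_lin).
- by rewrite (bilD2 (mE_bil E)) (bilZ2 (mE_bil E)) (linE rr_lin).
Qed.

Lemma FF_lin : linear FF.
Proof. by move=> k x y; rewrite /FF hs (linE (NE_lin (E:=E))) (linE rr_lin). Qed.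

Ltac expM := do 4 rewrite ?(bilD1 lact_bil) ?(bilN1 lact_bil) ?(bil01 lact_bil)
  ?(bilD2 lact_bil) ?(bilN2 lact_bil) ?(bil02 lact_bil)
  ?(bilD1 ract_bil) ?(bilN1 ract_bil) ?(bil01 ract_bil)
  ?(bilD2 ract_bil) ?(bilN2 ract_bil) ?(bil02 ract_bil)
  ?(bilD1 chi_bil) ?(bilN1 chi_bil) ?(bil01 chi_bil)
  ?(bilD2 chi_bil) ?(bilN2 chi_bil) ?(bil02 chi_bil)
  ?(linD NM_lin) ?(linN NM_lin) ?(lin0 NM_lin)
  ?(linD FF_lin) ?(linN FF_lin) ?(lin0 FF_lin).

Ltac expE := do 4 rewrite ?rr_mul ?rr_N ?ext_p_mul ?ext_p_N ?hsp ?rr_s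
  ?(linD rr_lin) ?(linN rr_lin) ?(linD pE_lin) ?(linN pE_lin).

Lemma chi_hoch a b c : hoch2 mul lact ract chi a b c = 0.
Proof.
have h := congr1 rr (@mE_assoc E (s a) (s b) (s c)).
move: h; expE; expM => h.
rewrite /hoch2; expM; zuse h.
Qed.

Lemma FF_coc a b : dNN1 mul N lact ract NM FF a b + partial2 N NM chi a b = 0.
Proof.
have h := congr1 rr (@NE_nij E (s a) (s b)).
move: h; expE; expM => h.
rewrite /dNN1 /partial2 /hoch1; expM; zuse h.
Qed.

End Ext2.
Arguments rr : clear implicits.
Arguments chi : clear implicits.
Arguments FF : clear implicits.


Section Change.
Variable E : abelian_extension mul N lact ract NM.
Variables s1 s2 : A -> ext_E E.
Hypotheses (hs1 : linear s1) (hsp1 : cancel s1 (pofE E)).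
Hypotheses (hs2 : linear s2) (hsp2 : cancel s2 (pofE E)).

Lemma rr_change x : rr E s2 x = rr E s1 x - rr E s1 (s2 (pofE E x)).
Proof.
have h := congr1 (rr E s1) (decomp hsp2 x).
rewrite (linD (rr_lin hs1 hsp1)) (rr_i hs1 hsp1) in h.
by rewrite h; zsolve_tac.
Qed.

Lemma change_chi a b : chi E s2 a b =
  chi E s1 a b + hoch1 mul lact ract (fun a => rr E s1 (s2 a)) a b.
Proof.
rewrite {1}/chi rr_change (rr_mul hs1 hsp1) ext_p_mul !hsp2 /hoch1.
zsolve_tac.
Qed.

Lemma change_FF a : FF E s2 a =
  FF E s1 a - partial1 N NM (fun a => rr E s1 (s2 a)) a.
Proof.
rewrite {1}/FF rr_change (rr_N hs1 hsp1) ext_p_N !hsp2 /partial1.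
zsolve_tac.
Qed.
End Change.

Section Iso.
Variables E E' : abelian_extension mul N lact ract NM.
Variable phi : ext_E E -> ext_E E'.
Hypotheses (phi_lin : linear phi)
  (phi_mul : forall x y, phi (mulE E x y) = mulE E' (phi x) (phi y))
  (phi_N : forall x, phi (NofE E x) = NofE E' (phi x))
  (phi_i : forall u, phi (ext_i E u) = ext_i E' u)
  (phi_p : forall x, pofE E' (phi x) = pofE E x).
Variable s : A -> ext_E E.
Hypotheses (hs : linear s) (hsp : cancel s (pofE E)).

Lemma iso_sec_lin : linear (phi \o s).
Proof. by move=> k x y /=; rewrite hs (linE phi_lin). Qed.
Lemma iso_sec_can : cancel (phi \o s) (pofE E').
Proof. by move=> a /=; rewrite phi_p hsp. Qed.

Lemma iso_rr x : rr E' (phi \o s) (phi x) = rr E s x.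
Proof.
rewrite {1}(decomp hsp x) (linD phi_lin) phi_i.
exact: (rr_si iso_sec_can).
Qed.

Lemma iso_chi a b : chi E' (phi \o s) a b = chi E s a b.
Proof. by rewrite /chi /= -phi_mul iso_rr. Qed.
Lemma iso_FF a : FF E' (phi \o s) a = FF E s a.
Proof. by rewrite /FF /= -phi_N iso_rr. Qed.
End Iso.

Section Build.
Variables E E' : abelian_extension mul N lact ract NM.
Variables (s : A -> ext_E E) (s' : A -> ext_E E').
Hypotheses (hs : linear s) (hsp : cancel s (pofE E)).
Hypotheses (hs' : linear s') (hsp' : cancel s' (pofE E')).
Hypotheses (echi : forall a b, chi E s a b = chi E' s' a b)
           (eFF : forall a, FF E s a = FF E' s' a).

Definition bphi x := s' (pofE E x) + ext_i E' (rr E s x).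
Definition bpsi y := s (pofE E' y) + ext_i E (rr E' s' y).

Lemma p_bphi x : pofE E' (bphi x) = pofE E x. Proof. exact: p_si. Qed.
Lemma rr_bphi x : rr E' s' (bphi x) = rr E s x. Proof. exact: rr_si. Qed.
Lemma p_bpsi y : pofE E (bpsi y) = pofE E' y. Proof. exact: p_si. Qed.
Lemma rr_bpsi y : rr E s (bpsi y) = rr E' s' y. Proof. exact: rr_si. Qed.

Lemma build_iso : ext_iso E E'.
Proof.
have eq' := ext_eq hsp'.
have eq := ext_eq hsp.
exists bphi; split; [split|split].
- move=> k x y; apply: eq'.
    by rewrite (linE (@ext_p_lin _ _ _ _ _ _ _ _ E')) !p_bphi (linE (@ext_p_lin _ _ _ _ _ _ _ _ E)).
  by rewrite (linE (rr_lin hs' hsp')) !rr_bphi (linE (rr_lin hs hsp)).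
- exists bpsi => x.
    by apply: eq; rewrite ?p_bpsi ?rr_bpsi ?p_bphi ?rr_bphi.
  by apply: eq'; rewrite ?p_bphi ?rr_bphi ?p_bpsi ?rr_bpsi.
- move=> x y; apply: eq'.
    by rewrite p_bphi !ext_p_mul !p_bphi.
  by rewrite rr_bphi (rr_mul hs' hsp') (rr_mul hs hsp) !p_bphi !rr_bphi echi.
- move=> x; apply: eq'.
    by rewrite p_bphi !ext_p_N !p_bphi.
  by rewrite rr_bphi (rr_N hs' hsp') (rr_N hs hsp) !p_bphi !rr_bphi eFF.
- move=> u; apply: eq'.
    by rewrite p_bphi !p_i.
  by rewrite rr_bphi (rr_i hs hsp) (rr_i hs' hsp').
- exact: p_bphi.
Qed.
End Build.

Section Std.
Variable c : cocycle2 mul N lact ract NM.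
Local Notation ch := (coc_chi c).
Local Notation F := (coc_F c).
Let chb := coc_chi_bilin c.
Let Fl := coc_F_lin c.

Definition AM : lmodType K := (A * M)%type.
Lemma AM_add1 (x y : AM) : (x + y).1 = x.1 + y.1. Proof. by []. Qed.
Lemma AM_add2 (x y : AM) : (x + y).2 = x.2 + y.2. Proof. by []. Qed.
Lemma AM_opp1 (x : AM) : (- x).1 = - x.1. Proof. by []. Qed.
Lemma AM_opp2 (x : AM) : (- x).2 = - x.2. Proof. by []. Qed.
Lemma AM_scale1 k (x : AM) : (k *: x).1 = k *: x.1. Proof. by []. Qed.
Lemma AM_scale2 k (x : AM) : (k *: x).2 = k *: x.2. Proof. by []. Qed.
Lemma AM_zero1 : (0 : AM).1 = 0. Proof. by []. Qed.
Lemma AM_zero2 : (0 : AM).2 = 0. Proof. by []. Qed.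
Lemma AM_eq (x y : AM) : x.1 = y.1 -> x.2 = y.2 -> x = y.
Proof. by case: x; case: y => /= ? ? ? ? -> ->. Qed.

Definition mulc (x y : AM) : AM :=
  (mul x.1 y.1, ch x.1 y.1 + lact x.1 y.2 + ract x.2 y.1).
Definition Nc (x : AM) : AM := (N x.1, F x.1 + NM x.2).
Definition ic (u : M) : AM := (0, u).
Definition pc (x : AM) : A := x.1.

Ltac expS := do 4 rewrite ?AM_add1 ?AM_add2 ?AM_opp1 ?AM_opp2 ?AM_scale1 ?AM_scale2
  ?AM_zero1 ?AM_zero2 /=
  ?(bilD1 lact_bil) ?(bilN1 lact_bil) ?(bil01 lact_bil) ?(bilZ1 lact_bil)
  ?(bilD2 lact_bil) ?(bilN2 lact_bil) ?(bil02 lact_bil) ?(bilZ2 lact_bil)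
  ?(bilD1 ract_bil) ?(bilN1 ract_bil) ?(bil01 ract_bil) ?(bilZ1 ract_bil)
  ?(bilD2 ract_bil) ?(bilN2 ract_bil) ?(bil02 ract_bil) ?(bilZ2 ract_bil)
  ?(bilD1 chb) ?(bilN1 chb) ?(bil01 chb) ?(bilZ1 chb)
  ?(bilD2 chb) ?(bilN2 chb) ?(bil02 chb) ?(bilZ2 chb)
  ?(bilD1 mul_bil) ?(bilN1 mul_bil) ?(bil01 mul_bil) ?(bilZ1 mul_bil)
  ?(bilD2 mul_bil) ?(bilN2 mul_bil) ?(bil02 mul_bil) ?(bilZ2 mul_bil)
  ?(linD NM_lin) ?(linN NM_lin) ?(lin0 NM_lin) ?(linZ NM_lin)
  ?(linD N_lin) ?(linN N_lin) ?(lin0 N_lin) ?(linZ N_lin)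
  ?(linD Fl) ?(linN Fl) ?(lin0 Fl) ?(linZ Fl)
  ?scalerDr ?scalerN ?scaler0 ?addr0 ?add0r ?subr0 ?oppr0.

Lemma mulc_bil : bilinear_map mulc.
Proof.
split=> [v|u] k x y /=; apply: AM_eq; rewrite /mulc; expS => //; zsolve_tac.
Qed.

Lemma mulc_assoc : associative mulc.
Proof.
move=> x y z; apply: AM_eq; rewrite /mulc /=; first exact: mul_assoc.
have h := coc_hoch c x.1 y.1 z.1.
move: h; rewrite /hoch2; expS => h.
rewrite !lact_assoc !ract_assoc !lr_assoc; expS.
zuse h.
Qed.

Lemma Nc_lin : linear Nc.
Proof. move=> k x y; apply: AM_eq; rewrite /Nc; expS => //; zsolve_tac. Qed.

Lemma Nc_nij x y : mulc (Nc x) (Nc y) = Nc (mulc (Nc x) y + mulc x (Nc y) - Nc (mulc x y)).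
Proof.
apply: AM_eq; rewrite /mulc /Nc /=.
  by case: HA => _ _ _ ->; expS.
have h := coc_N c x.1 y.1.
move: h; rewrite /dNN1 /partial2 /hoch1; expS => h.
expS; rewrite nijL nijR; expS.
zuse h.
Qed.

Lemma std_nij : is_nijenhuis_algebra mulc Nc.
Proof. split; [exact: mulc_bil | exact: mulc_assoc | exact: Nc_lin | exact: Nc_nij]. Qed.

Lemma ic_lin : linear ic.
Proof. by move=> k u v; apply: AM_eq; rewrite /ic; expS. Qed.
Lemma ic_mul u v : ic (0 : M) = mulc (ic u) (ic v).
Proof. by apply: AM_eq; rewrite /ic /mulc /=; expS. Qed.
Lemma ic_N u : ic (NM u) = Nc (ic u).
Proof. by apply: AM_eq; rewrite /ic /Nc /=; expS. Qed.
Lemma pc_lin : linear pc.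
Proof. by []. Qed.
Lemma pc_mul x y : pc (mulc x y) = mul (pc x) (pc y). Proof. by []. Qed.
Lemma pc_N x : pc (Nc x) = N (pc x). Proof. by []. Qed.
Lemma ic_inj : injective ic. Proof. by move=> u v []. Qed.
Lemma pc_surj a : exists x, pc x = a. Proof. by exists (a, 0). Qed.
Lemma pc_exact x : pc x = 0 <-> exists u, x = ic u.
Proof.
split; first by case: x => a u /= ->; exists u.
by case=> u ->.
Qed.
Lemma std_induced (s : A -> AM) : linear s -> cancel s pc ->
    forall a u, mulc (s a) (ic u) = ic (lact a u) /\ mulc (ic u) (s a) = ic (ract u a).
Proof.
move=> _ hsp a u; split; apply: AM_eq; rewrite /mulc /ic /= ?hsp; move: (hsp a); rewrite /pc => ->; expS => //.
Qed.

Definition Estd : abelian_extension mul N lact ract NM :=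
  @AbExt _ _ mul N _ lact ract NM AM mulc Nc ic pc std_nij ic_lin ic_mul ic_N
    pc_lin pc_mul pc_N ic_inj pc_surj pc_exact std_induced.

Definition s0 (a : A) : AM := (a, 0).
Lemma s0_lin : linear s0.
Proof. by move=> k a b; apply: AM_eq; rewrite /s0; expS. Qed.
Lemma s0_can : cancel s0 (pofE Estd). Proof. by []. Qed.

Lemma rr_std (x : AM) : rr Estd s0 x = x.2.
Proof.
have := congr1 snd (rr_spec s0_can x).
by rewrite AM_add2 AM_opp2 /= subr0.
Qed.

Lemma std_chi a b : chi Estd s0 a b = ch a b.
Proof. by rewrite /chi rr_std /= /mulc /=; expS. Qed.
Lemma std_FF a : FF Estd s0 a = F a.
Proof. by rewrite /FF rr_std /= /Nc /=; expS. Qed.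
End Std.

Definition secE (E : abelian_extension mul N lact ract NM) :=
  cid (exists_section (@ext_p_lin _ _ _ _ _ _ _ _ E) (ext_p_surj E)).
Definition sE E : A -> ext_E E := sval (secE E).
Definition hsE E : linear (sE E) := (svalP (secE E)).1.
Definition hspE E : cancel (sE E) (pofE E) := (svalP (secE E)).2.

Definition Phi E : cocycle2 mul N lact ract NM :=
  Cocycle2 (chi_bil (hsE E) (hspE E)) (FF_lin (hsE E) (hspE E))
           (chi_hoch (hsE E) (hspE E)) (FF_coc (hsE E) (hspE E)).

Lemma lin_comp (U V W : lmodType K) (f : U -> V) (g : V -> W) :
  linear f -> linear g -> linear (fun x => g (f x)).
Proof. by move=> hf hg k x y; rewrite hf hg. Qed.

Lemma main_iso E E' : ext_iso E E' <-> cohomologous (Phi E) (Phi E').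
Proof.
rewrite /cohomologous /=; split.
- case=> phi [[phil _] [phim phiN phii phip]].
  have hl := iso_sec_lin phil (hsE E).
  have hc := iso_sec_can phip (hspE E).
  exists (fun a => rr E' (sE E') ((phi \o sE E) a)); split.
  + exact: (lin_comp hl (rr_lin (hsE E') (hspE E'))).
  + move=> a b; rewrite -(iso_chi phil phim phii phip (hspE E)).
    rewrite (change_chi (hsE E') (hspE E') hc); zsolve_tac.
  + move=> a; rewrite -(iso_FF phil phiN phii phip (hspE E)).
    rewrite (change_FF (hsE E') (hspE E') hc); zsolve_tac.
- case=> f [fl hchi hF].
  pose s'' a := sE E' a + ext_i E' (f a).
  have hl : linear s''.
    by move=> k x y; rewrite /s'' (linE (hsE E')) (linE fl) (linE (ext_i_lin E')) scalerDr; zsolve_tac.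
  have hc : cancel s'' (pofE E') by move=> a; rewrite /s'' (p_si (hspE E')).
  have gf a : rr E' (sE E') (s'' a) = f a by rewrite /s'' (rr_si (hspE E')).
  apply: (build_iso (hsE E) (hspE E) hl hc).
  + move=> a b; rewrite (change_chi (hsE E') (hspE E') hc) /hoch1 !gf.
    have := hchi a b; rewrite /hoch1 => h; zuse h.
  + move=> a; rewrite (change_FF (hsE E') (hspE E') hc) /partial1 !gf.
    have := hF a; rewrite /partial1 => h; zuse h.
Qed.

Lemma main_surj c : exists E, cohomologous (Phi E) c.
Proof.
exists (Estd c); rewrite /cohomologous /=.
exists (fun a => rr (Estd c) s0 (sE (Estd c) a)); split.
- exact: (lin_comp (hsE (Estd c)) (rr_lin (E:=Estd c) s0_lin (s0_can c))).
- move=> a b; rewrite (change_chi (E:=Estd c) s0_lin (s0_can c) (hspE (Estd c))) std_chi.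
  zsolve_tac.
- move=> a; rewrite (change_FF (E:=Estd c) s0_lin (s0_can c) (hspE (Estd c))) std_FF.
  zsolve_tac.
Qed.

End Main.

Theorem theorem4p3 (K : fieldType) (charK0 : [pchar K] =i pred0)
  (A : lmodType K) (mul : A -> A -> A) (N : A -> A)
  (M : lmodType K) (lact : A -> M -> M) (ract : M -> A -> M) (NM : M -> M)
  (HA : is_nijenhuis_algebra mul N)
  (HM : is_nijenhuis_bimodule mul N lact ract NM) :
  exists Phi : abelian_extension mul N lact ract NM ->
               cocycle2 mul N lact ract NM,
    (forall E E', ext_iso E E' <-> cohomologous (Phi E) (Phi E')) /\
    (forall c, exists E, cohomologous (Phi E) c).
Proof.
exists (Phi HM); split.
- exact: main_iso.
- exact: main_surj.
Qed.
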